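(* Let $\mathcal E$ be a nest on a complex Banach space $X$ and let $\mathcal J$ be a $\mathcal T(\mathcal E)$-bimodule that is closed in the weak operator topology. Then $\mathcal J=\mathcal M(\Phi_{\mathcal J})$, and $\mathcal J$ is reflexive, i.e. $\mathcal J=\operatorname{Ref}\mathcal J$.
   Context: A nest $\mathcal E$ on $X$ is a family of closed linear subspaces of $X$, totally ordered by inclusion, containing $\{0\}$ and $X$, closed under arbitrary meets (intersections) and joins (norm-closed linear spans of unions). $\mathcal T(\mathcal E)=\{T\in\mathcal B(X): TE\subseteq E\ \forall E\in\mathcal E\}$. A $\mathcal T(\mathcal E)$-bimodule is a linear subspace $\mathcal J\subseteq\mathcal B(X)$ with $\mathcal T(\mathcal E)\mathcal J\subseteq\mathcal J$ and $\mathcal J\mathcal T(\mathcal E)\subseteq\mathcal J$. $\Phi_{\mathcal J}(E)=[\mathcal JE]$, the norm-closed linear span of $\{Tx:T\in\mathcal J,x\in E\}$. For a map $\Phi:\mathcal E\to\mathcal E$, $\mathcal M(\Phi)=\{T\in\mathcal B(X): TE\subseteq\Phi(E)\ \forall E\in\mathcal E\}$. For a subspace $\mathcal A\subseteq\mathcal B(X)$, $\operatorname{Ref}\mathcal A=\{T\in\mathcal B(X): Tx\in[\mathcal Ax]\ \forall x\in X\}$, where $[\mathcal Ax]$ is the norm-closed linear span of $\{Ax: A\in\mathcal A\}$. *)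

(* Defs.v *)
From HB Require Import structures.
From mathcomp Require Import all_boot all_algebra.
From mathcomp Require Import all_classical all_reals all_analysis.
From mathcomp.real_closed Require Import complex.
Import GRing.Theory Num.Theory.
Import numFieldNormedType.Exports.
Local Open Scope classical_set_scope.
Local Open Scope ring_scope.

Set Implicit Arguments.
Unset Strict Implicit.
Unset Printing Implicit Defensive.

Section NestDefs.
Variable R : realType.
Variable X : completeNormedModType R[i].

Definition is_linear_op (T : X -> X) : Prop :=
  forall (a : R[i]) (x y : X), T (a *: x + y) = a *: T x + T y.

Definition bounded_op (T : X -> X) : Prop :=
  is_linear_op T /\ exists M : R, forall x : X, `|T x| <= (M%:C)%C * `|x|.

Definition bounded_functional (phi : X -> R[i]) : Prop :=
  (forall (a : R[i]) (x y : X), phi (a *: x + y) = a * phi x + phi y) /\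
  exists M : R, forall x : X, `|phi x| <= (M%:C)%C * `|x|.

Definition lspan (A : set X) : set X :=
  [set x | exists (n : nat) (c : 'I_n -> R[i]) (v : 'I_n -> X),
     (forall i, A (v i)) /\ x = \sum_(i < n) c i *: v i].

Definition cspan (A : set X) : set X := closure (lspan A).

Definition closed_subspace (E : set X) : Prop :=
  closed E /\ E 0 /\ (forall (a : R[i]) x y, E x -> E y -> E (a *: x + y)).

Definition nest (N : set (set X)) : Prop :=
  (forall E, N E -> closed_subspace E) /\
  (forall E F, N E -> N F -> E `<=` F \/ F `<=` E) /\
  N [set 0] /\ N setT /\
  (forall F, F `<=` N -> N (\bigcap_(E in F) E)) /\
  (forall F, F `<=` N -> N (cspan (\bigcup_(E in F) E))).

Definition nest_alg (N : set (set X)) : set (X -> X) :=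
  [set T | bounded_op T /\ forall E, N E -> T @` E `<=` E].

Definition op_subspace (J : set (X -> X)) : Prop :=
  J `<=` bounded_op /\ J (fun _ => 0) /\
  (forall (a : R[i]) S T, J S -> J T -> J (fun x => a *: S x + T x)).

Definition bimodule (N : set (set X)) (J : set (X -> X)) : Prop :=
  op_subspace J /\
  (forall A T, nest_alg N A -> J T -> J (A \o T)) /\
  (forall A T, nest_alg N A -> J T -> J (T \o A)).

(* T is in the weak-operator-topology closure of J: every basic WOT
   neighbourhood {S | |phi_k((S - T) x_k)| < eps, k < n} of T meets J *)
Definition wot_closure (J : set (X -> X)) : set (X -> X) :=
  [set T | bounded_op T /\
     forall (n : nat) (x : 'I_n -> X) (phi : 'I_n -> X -> R[i]) (eps : R),
       (forall k, bounded_functional (phi k)) -> 0 < eps ->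
       exists2 S, J S & forall k, `|phi k (S (x k)) - phi k (T (x k))| < (eps%:C)%C].

Definition wot_closed (J : set (X -> X)) : Prop := wot_closure J `<=` J.

Definition Phi_of (J : set (X -> X)) (E : set X) : set X :=
  cspan [set T x | T in J & x in E].

Definition M_of (N : set (set X)) (Phi : set X -> set X) : set (X -> X) :=
  [set T | bounded_op T /\ forall E, N E -> T @` E `<=` Phi E].

Definition Ref (A : set (X -> X)) : set (X -> X) :=
  [set T | bounded_op T /\ forall x, cspan [set S x | S in A] (T x)].

End NestDefs.

(* Main.v *)
Require Import Defs.
From HB Require Import structures.
From mathcomp Require Import all_boot all_algebra.
From mathcomp Require Import all_classical all_reals all_analysis.
From mathcomp.real_closed Require Import complex.
Import GRing.Theory Num.Theory.
Import numFieldNormedType.Exports.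
Local Open Scope classical_set_scope.
Local Open Scope ring_scope.
Set Implicit Arguments.
Unset Strict Implicit.
Unset Printing Implicit Defensive.

From mathcomp Require Import zify.
From mathcomp Require Import ring lra.
Import order.Order.TTheory.
Section Gen.
Variable R : realType.
Variable X : completeNormedModType R[i].

Lemma oplin0 (T : X -> X) : is_linear_op T -> T 0 = 0.
Proof.
move=> lT; have h := lT 1 0 0; rewrite scale1r addr0 scale1r in h.
by apply: (addIr (T 0)); rewrite add0r -h.
Qed.

Lemma oplinD (T : X -> X) x y : is_linear_op T -> T (x + y) = T x + T y.
Proof. by move=> lT; have := lT 1 x y; rewrite !scale1r. Qed.

Lemma oplinZ (T : X -> X) a x : is_linear_op T -> T (a *: x) = a *: T x.
Proof. by move=> lT; rewrite -[a *: x]addr0 lT oplin0 // addr0. Qed.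

Lemma oplinN (T : X -> X) x : is_linear_op T -> T (- x) = - T x.
Proof. by move=> lT; rewrite -scaleN1r oplinZ // scaleN1r. Qed.

Lemma oplinB (T : X -> X) x y : is_linear_op T -> T (x - y) = T x - T y.
Proof. by move=> lT; rewrite oplinD // oplinN. Qed.

Lemma oplin_sum (T : X -> X) n (c : 'I_n -> R[i]) (v : 'I_n -> X) :
  is_linear_op T -> T (\sum_(i < n) c i *: v i) = \sum_(i < n) c i *: T (v i).
Proof.
move=> lT; elim: n c v => [|n IH] c v; first by rewrite !big_ord0 oplin0.
by rewrite !big_ord_recr /= oplinD // oplinZ // IH.
Qed.

Definition flin (phi : X -> R[i]) :=
  forall (a : R[i]) (x y : X), phi (a *: x + y) = a * phi x + phi y.

Lemma flin0 phi : flin phi -> phi 0 = 0.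
Proof.
move=> lT; have h := lT 1 0 0; rewrite scale1r addr0 mul1r in h.
by apply: (addIr (phi 0)); rewrite add0r -h.
Qed.

Lemma flinD phi x y : flin phi -> phi (x + y) = phi x + phi y.
Proof. by move=> lT; have := lT 1 x y; rewrite scale1r mul1r. Qed.

Lemma flinZ phi a x : flin phi -> phi (a *: x) = a * phi x.
Proof. by move=> lT; rewrite -[a *: x]addr0 lT flin0 // addr0. Qed.

Lemma flinN phi x : flin phi -> phi (- x) = - phi x.
Proof. by move=> lT; rewrite -scaleN1r flinZ // mulN1r. Qed.

Lemma flinB phi x y : flin phi -> phi (x - y) = phi x - phi y.
Proof. by move=> lT; rewrite flinD // flinN. Qed.

Lemma flin_sum phi n (c : 'I_n -> R[i]) (v : 'I_n -> X) :
  flin phi -> phi (\sum_(i < n) c i *: v i) = \sum_(i < n) c i * phi (v i).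
Proof.
move=> lT; elim: n c v => [|n IH] c v; first by rewrite !big_ord0 flin0.
by rewrite !big_ord_recr /= flinD // flinZ // IH.
Qed.

Lemma bound_continuous (Y : normedModType R[i]) (f : X -> Y) (M : R) :
  (forall x y, f (x - y) = f x - f y) ->
  (forall x, `|f x| <= (M%:C)%C * `|x|) -> continuous f.
Proof.
move=> fB fM x; apply/cvgrPdist_lt => e e0.
have M1 : 0 < ((`|M| + 1)%:C)%C :> R[i].
  by rewrite ltcR; apply: (lt_le_trans ltr01); rewrite lerDr.
have d0 : 0 < e / ((`|M| + 1)%:C)%C by rewrite divr_gt0.
have H := (@cvgrPdist_lt _ _ _ (nbhs x) _ id x).1 cvg_id _ d0.
near=> t.
have xt : `|x - t| < e / ((`|M| + 1)%:C)%C by near: t; apply: H; exact: nbhs_filter.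
rewrite -fB.
apply: (le_lt_trans (fM _)).
apply: (@le_lt_trans _ _ (((`|M| + 1)%:C)%C * `|x - t|)).
  apply: ler_wpM2r; first exact: normr_ge0.
  by rewrite lecR (le_trans (ler_norm M)) // lerDl.
by rewrite mulrC -ltr_pdivlMr.
Unshelve. all: end_near.
Qed.

End Gen.
Section GenB.
Variable R : realType.
Variable X : completeNormedModType R[i].

Definition subsp (S : set X) := S 0 /\ forall (a : R[i]) x y, S x -> S y -> S (a *: x + y).

Lemma subsp_sum S n (c : 'I_n -> R[i]) (v : 'I_n -> X) :
  subsp S -> (forall i, S (v i)) -> S (\sum_(i < n) c i *: v i).
Proof.
move=> [S0 SL] Sv; elim: n c v Sv => [|n IH] c v Sv; first by rewrite big_ord0.
by rewrite big_ord_recr /= addrC; apply: SL => //; apply: IH.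
Qed.

Lemma lspan_sub (A S : set X) : subsp S -> A `<=` S -> lspan A `<=` S.
Proof. by move=> sS AS x [n [c [v [Av ->]]]]; apply: subsp_sum => // i; apply: AS. Qed.

Lemma sub_lspan (A : set X) : A `<=` lspan A.
Proof.
move=> x Ax; exists 1%N, (fun _ => 1), (fun _ => x); split => //.
by rewrite big_ord1 scale1r.
Qed.

Lemma lspanS (A B : set X) : A `<=` B -> lspan A `<=` lspan B.
Proof. by move=> AB x [n [c [v [Av ->]]]]; exists n, c, v; split => // i; apply: AB. Qed.

Lemma cspan_sub (A S : set X) : closed S -> subsp S -> A `<=` S -> cspan A `<=` S.
Proof.
move=> cS sS AS; rewrite /cspan (closure_id S).1 //.
by apply: closureS; apply: lspan_sub.
Qed.

Lemma sub_cspan (A : set X) : A `<=` cspan A.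
Proof. by move=> x /sub_lspan; apply: subset_closure. Qed.

Lemma cspanS (A B : set X) : A `<=` B -> cspan A `<=` cspan B.
Proof. by move=> AB; apply: closureS; apply: lspanS. Qed.

Lemma cs_subsp (E : set X) : closed_subspace E -> subsp E.
Proof. by case=> _ []. Qed.

Lemma cs_closed (E : set X) : closed_subspace E -> closed E.
Proof. by case. Qed.

Lemma re_norm (z : R[i]) : 0 <= z -> ((complex.Re z)%:C)%C = z.
Proof. by move=> z0; apply: RRe_real; apply: ger0_real. Qed.

Lemma bop_lin (T : X -> X) : bounded_op T -> is_linear_op T.
Proof. by case. Qed.

Lemma bop_cont (T : X -> X) : bounded_op T -> continuous T.
Proof.
move=> [lT [M hM]]; apply: (@bound_continuous _ _ _ _ M) => // x y.
exact: oplinB.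
Qed.

Lemma bf_lin (phi : X -> R[i]) : bounded_functional phi -> flin phi.
Proof. by case. Qed.

Lemma bf_cont (phi : X -> R[i]) : bounded_functional phi ->
  continuous (phi : X -> (R[i] : numFieldType)).
Proof.
move=> [lT [M hM]]; apply: (@bound_continuous _ _ _ _ M) => // x y.
exact: flinB.
Qed.

Definition r1 (v : X) (psi : X -> R[i]) := fun y => psi y *: v.

Lemma r1_bop v psi : bounded_functional psi -> bounded_op (r1 v psi).
Proof.
move=> [lp [M hM]]; split.
  by move=> a x y; rewrite /r1 lp scalerDl scalerA.
exists (M * complex.Re `|v|) => y; rewrite /r1 normrZ.
rewrite rmorphM /= re_norm ?normr_ge0 //.
rewrite mulrAC; apply: ler_wpM2r; first exact: normr_ge0.
exact: hM.
Qed.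

Lemma r1_alg N v psi : bounded_functional psi ->
  (forall E, N E -> (forall y, E y -> psi y = 0) \/ E v) ->
  (forall E, N E -> closed_subspace E) ->
  nest_alg N (r1 v psi).
Proof.
move=> bp h cs; split; first exact: r1_bop.
move=> E NE _ [y Ey <-]; rewrite /r1.
have [S0 SL] := cs_subsp (cs _ NE).
case: (h E NE) => [/(_ y Ey) -> | Ev]; first by rewrite scale0r.
by rewrite -[_ *: v]addr0; apply: SL.
Qed.

End GenB.
Section Dist.
Variable R : realType.
Variable X : completeNormedModType R[i].

Lemma ReD (x y : R[i]) : complex.Re (x + y) = complex.Re x + complex.Re y.
Proof. by case: x => a b; case: y. Qed.

Lemma ReN (x : R[i]) : complex.Re (- x) = - complex.Re x.
Proof. by case: x. Qed.

Lemma Re_le (x y : R[i]) : x <= y -> complex.Re x <= complex.Re y.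
Proof. by rewrite lecE => /andP[]. Qed.

Lemma Re_lt (x y : R[i]) : x < y -> complex.Re x < complex.Re y.
Proof. by rewrite ltcE => /andP[]. Qed.

Lemma ReCM (t : R) (z : R[i]) : complex.Re ((t%:C)%C * z) = t * complex.Re z.
Proof. by case: z => a b /=; rewrite mul0r subr0. Qed.

Lemma ReC (t : R) : complex.Re ((t%:C)%C) = t.
Proof. by []. Qed.

Lemma dist_pos (K : set X) (w : X) : closed K -> ~ K w ->
  exists2 r : R, 0 < r & forall k, K k -> ((r%:C)%C) <= `|w - k|.
Proof.
move=> Kcl Kw.
have : ~ closure K w by move=> /Kcl.
move=> /existsNP [B] /not_implyP [nB nI].
move: nB => /nbhs_ballP [e e0 sB].
have eR : e \is Num.real by apply: gtr0_real.
exists (complex.Re e); first by move: (Re_lt e0).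
move=> k Kk; rewrite re_norm; last exact: ltW.
rewrite real_leNgt ?inE ?normr_real //; apply/negP => ek.
apply: nI; exists k; split => //; apply: sB.
by rewrite -ball_normE /ball_ /=.
Qed.

End Dist.
Section HBr.
Variable R : realType.
Variable X : completeNormedModType R[i].
Variable K : set X.
Variable w : X.
Hypothesis Ksub : subsp K.
Hypothesis Kw : ~ K w.
Variable r : R.
Hypothesis r0 : 0 < r.
Hypothesis rd : forall k, K k -> ((r%:C)%C) <= `|w - k|.

Local Notation rs t x := ((((t : R)%:C)%C : R[i]) *: (x : X)).

Definition pn (x : X) : R := complex.Re `|x| / r.

Lemma pn_ge0 x : 0 <= pn x.
Proof. by rewrite /pn divr_ge0 ?(ltW r0) //; exact: (Re_le (normr_ge0 x)). Qed.

Lemma pn_tri x y : pn (x + y) <= pn x + pn y.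
Proof.
rewrite /pn -mulrDl ler_pM2r ?invr_gt0 // -ReD; apply: Re_le; exact: ler_normD.
Qed.

Lemma pnN x : pn (- x) = pn x.
Proof. by rewrite /pn normrN. Qed.

Lemma pn_hom t x : 0 <= t -> pn (rs t x) = t * pn x.
Proof.
by move=> t0; rewrite /pn normrZ ger0_norm ?ler0c // ReCM mulrA.
Qed.

Lemma C0 : ((0 : R)%:C)%C = 0 :> R[i]. Proof. by []. Qed.
Lemma C1 : ((1 : R)%:C)%C = 1 :> R[i]. Proof. by []. Qed.
Lemma CM (s t : R) : ((s * t)%:C)%C = (s%:C)%C * (t%:C)%C :> R[i].
Proof. by rewrite rmorphM. Qed.
Lemma CD (s t : R) : ((s + t)%:C)%C = (s%:C)%C + (t%:C)%C :> R[i].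
Proof. by rewrite rmorphD. Qed.
Lemma CN (s : R) : ((- s)%:C)%C = - (s%:C)%C :> R[i].
Proof. by rewrite rmorphN. Qed.

Lemma rs0 x : rs 0 x = 0.
Proof. by rewrite C0 scale0r. Qed.

Lemma rs1 x : rs 1 x = x.
Proof. by rewrite C1 scale1r. Qed.

Lemma rsA s t x : rs s (rs t x) = rs (s * t) x.
Proof. by rewrite scalerA -CM. Qed.

Lemma rsDl s t x : rs s x + rs t x = rs (s + t) x.
Proof. by rewrite -scalerDl -CD. Qed.

Lemma ksub_lin (t : R) k1 k2 : K k1 -> K k2 -> K (rs t k1 + k2).
Proof. by move=> h1 h2; apply: Ksub.2. Qed.

Lemma ksub0 : K 0. Proof. exact: Ksub.1. Qed.

Definition valid (G : set (X * R)) :=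
  [/\ G (0, 0),
      (forall t x a y b, G (x, a) -> G (y, b) -> G (rs t x + y, t * a + b)),
      (forall x a b, G (x, a) -> G (x, b) -> a = b),
      (forall x a, G (x, a) -> a <= pn x) &
      (forall k t, K k -> G (k + rs t w, t))].

Lemma rsN1 x : rs (-1) x = - x.
Proof. by rewrite CN C1 scaleN1r. Qed.

Lemma sep_t (D : set X) (z y y' : X) (t t' : R) :
  (forall s x1 x2, D x1 -> D x2 -> D (rs s x1 + x2)) -> D 0 ->
  ~ D z -> D y -> D y' -> y + rs t z = y' + rs t' z -> t = t'.
Proof.
move=> Dl D0 Dz Dy Dy' e; apply/eqP; apply/negPn/negP => tt.
apply: Dz.
have e1 : rs t z = - y + (y' + rs t' z) by rewrite -e addKr.
have e2 : rs (t - t') z = y' - y.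
  by rewrite -rsDl CN scaleNr e1 addrA addrK addrC.
have tt0 : t - t' != 0 by rewrite subr_eq0.
have -> : z = rs ((t - t')^-1) (rs (-1) y + y') + 0.
  by rewrite addr0 rsN1 [- y + y']addrC -e2 rsA mulVf // rs1.
by apply: (Dl) => //; apply: (Dl).
Qed.

Definition G0 : set (X * R) := [set p | exists k t, K k /\ p = (k + rs t w, t)].

Lemma valid_G0 : valid G0.
Proof.
split.
- by exists 0, 0; split; [exact: ksub0 | rewrite rs0 addr0].
- move=> s x a y b [k1 [t1 [K1 e1]]] [k2 [t2 [K2 e2]]].
  case: e1 => -> ->; case: e2 => -> ->.
  exists (rs s k1 + k2), (s * t1 + t2); split; first exact: ksub_lin.
  by rewrite scalerDr rsA addrACA rsDl.
- move=> x a b [k1 [t1 [K1 e1]]] [k2 [t2 [K2 e2]]].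
  move: e2; case: e1 => -> -> [e ->].
  exact: (sep_t ksub_lin ksub0 Kw K1 K2 e).
- move=> x a [k [t [Kk e]]]; case: e => -> ->.
  have [t0|t0] := lerP t 0; first exact: (le_trans t0 (pn_ge0 _)).
  have Kk' : K (rs (- t^-1) k).
    by rewrite -[rs _ k]addr0; apply: ksub_lin => //; exact: ksub0.
  have -> : k + rs t w = rs t (w - rs (- t^-1) k).
    by rewrite scalerDr scalerN rsA mulrN mulfV ?gt_eqF // rsN1 opprK addrC.
  have h1 : 1 <= pn (w - rs (- t^-1) k).
    by rewrite /pn ler_pdivlMr // mul1r; exact: (Re_le (rd Kk')).
  rewrite pn_hom; last exact: ltW.
  by have := ler_wpM2l (ltW t0) h1; rewrite mulr1.
- by move=> k t Kk; exists k, t.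
Qed.

Definition Pv (G : set (X * R)) := G = set0 \/ valid G.

Lemma chain_P (F : set (set (X * R))) :
  F `<=` Pv -> total_on F subset -> Pv (\bigcup_(G in F) G).
Proof.
move=> FP Ftot.
have hv G p : F G -> G p -> valid G.
  move=> FG Gp; case: (FP _ FG) => // e; by rewrite e in Gp.
case: (pselect (exists G, F G /\ G !=set0)) => [[G1 [FG1 [p1 Gp1]]]|none]; last first.
  left; apply/seteqP; split => // p [G FG Gp]; apply: none; exists G; split => //.
  by exists p.
have [G10 _ _ _ G1K] := hv _ _ FG1 Gp1.
right; split.
- by exists G1.
- move=> t x a y b [Ga FGa Gax] [Gb FGb Gby].
  case: (Ftot _ _ FGa FGb) => [sab|sba].
    exists Gb => //; have [_ h _ _ _] := hv _ _ FGb Gby; apply: h => //; exact: (sab _ Gax).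
  exists Ga => //; have [_ h _ _ _] := hv _ _ FGa Gax; apply: h => //; exact: (sba _ Gby).
- move=> x a b [Ga FGa Gax] [Gb FGb Gbx].
  case: (Ftot _ _ FGa FGb) => [sab|sba].
    have [_ _ h _ _] := hv _ _ FGb Gbx; exact: (h x a b (sab _ Gax) Gbx).
  have [_ _ h _ _] := hv _ _ FGa Gax; exact: (h x a b Gax (sba _ Gbx)).
- move=> x a [G FG Gx]; have [_ _ _ h _] := hv _ _ FG Gx; exact: h.
- by move=> k t Kk; exists G1 => //; apply: G1K.
Qed.

Lemma extend (A : set (X * R)) z : valid A -> ~ (exists a, A (z, a)) ->
  exists B, valid B /\ A `<` B.
Proof.
move=> [A0 AL Af Ad AK] nz.
pose L := [set v | exists y a, A (y, a) /\ v = a - pn (y - z)].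
have Lub y' a' : A (y', a') -> ubound L (pn (y' + z) - a').
  move=> Ay' v [y [a [Aya ->]]].
  have := Ad _ _ (AL 1 _ _ _ _ Aya Ay'); rewrite rs1 mul1r => h.
  have e : y + y' = (y - z) + (y' + z) by rewrite addrACA addNr addr0.
  rewrite e in h; have := le_trans h (pn_tri _ _); lra.
have L0 : L (0 - pn (0 - z)) by exists 0, 0; split.
have hub : has_ubound L by exists (pn (0 + z) - 0); apply: Lub.
set c := sup L.
have hc1 y a : A (y, a) -> a - pn (y - z) <= c.
  by move=> Aya; apply: ub_le_sup => //; exists y, a.
have hc2 y a : A (y, a) -> c <= pn (y + z) - a.
  by move=> Aya; apply: ge_sup; [exists (0 - pn (0 - z)) | apply: Lub].
have dom y a t : A (y, a) -> a + t * c <= pn (y + rs t z).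
  move=> Aya; have [tn|tp|->] := ltgtP t 0; last first.
  - by rewrite mul0r addr0 rs0 addr0; apply: Ad.
  - have h := hc2 _ _ (AL t^-1 _ _ _ _ Aya A0); rewrite !addr0 in h.
    have e : pn (y + rs t z) = t * pn (rs t^-1 y + z).
      rewrite -pn_hom; last exact: ltW.
      congr pn.
      by rewrite scalerDr rsA mulfV ?gt_eqF // rs1.
    rewrite e; have h2 := ler_wpM2l (ltW tp) h.
    rewrite mulrBr mulVKf ?gt_eqF // in h2; lra.
  - have sp : 0 < - t by rewrite oppr_gt0.
    have h := hc1 _ _ (AL (- t)^-1 _ _ _ _ Aya A0); rewrite !addr0 in h.
    have e : pn (y + rs t z) = (- t) * pn (rs (- t)^-1 y - z).
      rewrite -pn_hom; last exact: ltW.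
      congr pn.
      by rewrite scalerBr rsA mulfV ?gt_eqF // rs1 CN scaleNr opprK.
    rewrite e; have h2 := ler_wpM2l (ltW sp) h.
    rewrite mulrBr mulVKf ?(gt_eqF sp) // in h2; lra.
pose B := [set p | exists y a t, A (y, a) /\ p = (y + rs t z, a + t * c)].
have vB : valid B.
  split.
  - by exists 0, 0, 0; split => //; rewrite rs0 addr0 mul0r addr0.
  - move=> s x a y b [y1 [a1 [t1 [A1 e1]]]] [y2 [a2 [t2 [A2 e2]]]].
    case: e1 => -> ->; case: e2 => -> ->.
    exists (rs s y1 + y2), (s * a1 + a2), (s * t1 + t2); split; first exact: AL.
    congr (_, _); first by rewrite scalerDr rsA addrACA rsDl.
    by rewrite mulrDr mulrDl !mulrA addrACA addrACA.
  - move=> x a b [y1 [a1 [t1 [A1 e1]]]] [y2 [a2 [t2 [A2 e2]]]].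
    move: e2; case: e1 => -> -> [e ->].
    have Dl s x1 x2 : (exists a, A (x1, a)) -> (exists a, A (x2, a)) ->
        exists a, A (rs s x1 + x2, a).
      by move=> [b1 h1] [b2 h2]; exists (s * b1 + b2); apply: AL.
    have tt := sep_t Dl (ex_intro _ 0 A0) nz (ex_intro _ _ A1) (ex_intro _ _ A2) e.
    subst t2; have yy : y1 = y2 by apply: (addIr (rs t1 z)).
    by subst y2; rewrite (Af _ _ _ A1 A2).
  - by move=> x a [y [a0 [t [Ay e]]]]; case: e => -> ->; apply: dom.
  - move=> k t Kk; exists (k + rs t w), t, 0; split; first exact: AK.
    by rewrite rs0 addr0 mul0r addr0.
exists B; split => //; split.
- move=> [x a] Axa; exists x, a, 0; split => //.
  by rewrite rs0 addr0 mul0r addr0.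
- move=> sBA; apply: nz; exists c; apply: sBA; exists 0, 0, 1; split => //.
  by rewrite rs1 add0r mul1r add0r.
Qed.

Lemma HB_real : exists g : X -> R,
  [/\ (forall t x y, g (rs t x + y) = t * g x + g y),
      (forall x, g x <= pn x) &
      (forall k t, K k -> g (k + rs t w) = t)].
Proof.
have [A [PA Amax]] := Zorn_bigcup chain_P.
have vA : valid A.
  case: PA => // A0; exfalso; apply: (Amax G0); last by right; exact: valid_G0.
  rewrite A0; split => // h.
  by have [h0 _ _ _ _] := valid_G0; have := h _ h0.
have tot z : exists a, A (z, a).
  apply: contrapT => nz; have [B [vB AB]] := extend vA nz.
  by apply: (Amax B AB); right.
have [g hg] := choice tot.
have [A0 AL Af Ad AK] := vA.
exists g; split.
- by move=> t x y; apply: Af (hg _) (AL _ _ _ _ _ (hg x) (hg y)).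
- by move=> x; exact: Ad _ _ (hg x).
- by move=> k t Kk; apply: Af (hg _) (AK _ _ Kk).
Qed.

Lemma normCr (t : R) : `|(t%:C)%C| = ((`|t|)%:C)%C :> R[i].
Proof. by rewrite normc_def /= [0 ^+ 2]expr2 mulr0 addr0 sqrtr_sqr. Qed.

Lemma norm_i : `|'i%C| = 1 :> R[i].
Proof. by rewrite normc_def /= [0 ^+ 2]expr2 mulr0 add0r expr1n sqrtr1 C1. Qed.

Lemma HB_sep_r : exists psi : X -> R[i], [/\ bounded_functional psi,
  (forall k, K k -> psi k = 0) & psi w != 0].
Proof.
have [g [gL gp gK]] := HB_real.
have g0 : g 0 = 0.
  have := gL 1 0 0; rewrite rs1 addr0 mul1r => h.
  by apply: (addIr (g 0)); rewrite add0r -h.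
have gD x y : g (x + y) = g x + g y by rewrite -{1}[x]rs1 gL mul1r.
have gZ t x : g (rs t x) = t * g x by rewrite -[rs t x]addr0 gL g0 addr0.
have gN x : g (- x) = - g x by rewrite -rsN1 gZ mulN1r.
have gnorm x : `|g x| <= pn x.
  by rewrite ler_norml gp andbT lerNl -gN -pnN gp.
pose psi x := ((g x)%:C)%C - 'i%C * ((g ('i%C *: x))%:C)%C.
have psiD x y : psi (x + y) = psi x + psi y.
  by rewrite /psi scalerDr !gD !CD mulrDr opprD addrACA.
have psiZ al x : psi (al *: x) = al * psi x.
  have eal : al = ((complex.Re al)%:C)%C + 'i%C * ((complex.Im al)%:C)%C.
    exact: complexE.
  set a := complex.Re al; set b := complex.Im al.
  have e1 : al *: x = rs a x + rs b ('i%C *: x).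
    by rewrite {1}eal scalerDl [_ * _%:C%C]mulrC scalerA.
  have e2 : 'i%C *: (al *: x) = rs a ('i%C *: x) - rs b x.
    rewrite e1 scalerDr !scalerA [_ * a%:C%C]mulrC [_ * b%:C%C]mulrC -!scalerA.
    by congr (_ + _); rewrite (scalerA 'i%C 'i%C x) -expr2 sqr_i scaleN1r scalerN.
  rewrite /psi e2 e1 gD !gZ gD gN !gZ {1}eal.
  rewrite !CD !CN !CM.
  set I := 'i%C; set A := (a%:C)%C; set B := (b%:C)%C.
  set G1 := ((g x)%:C)%C; set G2 := ((g (I *: x))%:C)%C.
  have hI : I * I = -1 by rewrite -expr2 sqr_i.
  apply/eqP; rewrite -subr_eq0; apply/eqP.
  transitivity ((I * I + 1) * (B * G2)); first by ring.
  by rewrite hI addNr mul0r.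
exists psi; split.
- split; first by move=> al x y; rewrite psiD psiZ.
  exists (2 / r) => x.
  rewrite /psi (le_trans (ler_normB _ _)) //.
  rewrite normrM norm_i mul1r !normCr.
  have h1 := gnorm x; have h2 := gnorm ('i%C *: x).
  have epn : pn ('i%C *: x) = pn x by rewrite /pn normrZ norm_i mul1r.
  rewrite epn in h2.
  rewrite -CD (le_trans (y := (((pn x + pn x))%:C)%C)) //; first by rewrite lecR lerD.
  rewrite -[X in _ <= _ * X](re_norm (normr_ge0 x)) -CM lecR /pn.
  by rewrite le_eqVlt; apply/orP; left; apply/eqP; ring.
- move=> k Kk; rewrite /psi.
  have gk : g k = 0 by rewrite -[k]addr0 -(rs0 w) gK.
  have Kik : K ('i%C *: k) by rewrite -[_ *: k]addr0; apply: Ksub.2 => //; exact: Ksub.1.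
  have gik : g ('i%C *: k) = 0 by rewrite -[_ *: k]addr0 -(rs0 w) gK.
  by rewrite gk gik C0 mulr0 subr0.
- have gw : g w = 1 by rewrite -[w]add0r -[w in 0 + w]rs1 gK //; exact: Ksub.1.
  rewrite /psi gw; apply/eqP => /(congr1 (@complex.Re R)) /=.
  rewrite !mul0r !mul1r subr0 oppr0 addr0 => /eqP; rewrite oner_eq0.
  by [].
Qed.

End HBr.

Lemma HB_sep (R : realType) (X : completeNormedModType R[i]) (K : set X) (w : X) :
  closed K -> subsp K -> ~ K w ->
  exists psi : X -> R[i], [/\ bounded_functional psi,
    (forall k, K k -> psi k = 0) & psi w != 0].
Proof.
move=> Kcl Ks Kw; have [r r0 rd] := dist_pos Kcl Kw.
exact: (HB_sep_r Ks Kw r0 rd).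
Qed.
Section LinAlg.
Variable R : realType.
Local Notation C := (R[i]).

Lemma subsp_mx n (S : set 'rV[C]_n) : S 0 ->
  (forall (a : C) u v, S u -> S v -> S (a *: u + v)) ->
  exists M : 'M[C]_n, forall u, S u <-> (u <= M)%MS.
Proof.
move=> S0 SL.
have SZ a u : S u -> S (a *: u) by move=> Su; rewrite -[_ *: u]addr0; apply: SL.
have key k : (exists M : 'M[C]_n, (forall u, (u <= M)%MS -> S u) /\
                                  (forall u, S u -> (u <= M)%MS)) \/
             (exists M : 'M[C]_n, (forall u, (u <= M)%MS -> S u) /\ (k <= \rank M)%N).
  elim: k => [|k IH].
    by right; exists 0; split => // u; rewrite submx0 => /eqP ->.
  case: IH => [hl|[M [MS kM]]]; first by left.
  case: (pselect (forall u, S u -> (u <= M)%MS)) => [h|/existsNP [v /not_implyP [Sv vM]]].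
    by left; exists M.
  right; exists (M + v)%MS; split.
    move=> u /sub_addsmxP [[p q] /= ->].
    have [a ->] : exists a, q *m v = a *: v.
      by apply/sub_rVP; apply: submxMl.
    rewrite addrC; apply: SL => //.
    by apply: MS; apply: submxMl.
  have [le_r eq_r] := mxrank_leqif_sup (addsmxSl M v).
  have ne : (\rank M == \rank (M + v)%MS) = false.
    rewrite eq_r; apply/negP => h; apply: vM; exact: submx_trans (addsmxSr M v) h.
  move: ne => /negbT ne; lia.
case: (key n.+1) => [[M [h1 h2]]|[M [_ hM]]].
  by exists M => u; split; [apply: h2|apply: h1].
by exfalso; move: (rank_leq_col M) hM; lia.
Qed.

Lemma prod_X0 (rs : seq C) : (forall z, z \in rs -> z = 0) ->
  \prod_(z <- rs) ('X - z%:P) = 'X^(size rs).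
Proof.
elim: rs => [|z rs IH] h; first by rewrite big_nil expr0.
rewrite big_cons IH /=; last by move=> y yr; apply: h; rewrite inE yr orbT.
by rewrite (h z) ?inE ?eqxx // subr0 exprS.
Qed.

Lemma trace_nil n (M : 'M[C]_n) :
  (forall (a : C) (v : 'rV_n), v *m M = a *: v -> v != 0 -> a = 0) -> \tr M = 0.
Proof.
case: n M => [|n] M h; first by rewrite /mxtrace big_ord0.
have [rs ers] := closed_field_poly_normal (char_poly M).
have lc : lead_coef (char_poly M) = 1 by apply/monicP; exact: char_poly_monic.
rewrite lc scale1r in ers.
have rs0 z : z \in rs -> z = 0.
  move=> zrs; have : root (char_poly M) z by rewrite ers root_prod_XsubC.
  rewrite -eigenvalue_root_char => /eigenvalueP [v vM v0]; exact: h vM v0.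
have ers2 : char_poly M = 'X^(size rs) by rewrite ers prod_X0.
have szr : size rs = n.+1.
  by have := size_char_poly M; rewrite ers2 size_polyXn => -[].
have := char_poly_trace M (ltn0Sn n); rewrite ers2 szr coefXn /=.
by move=> e; apply/eqP; rewrite -oppr_eq0 -e ltn_eqF.
Qed.

End LinAlg.
Section Key.
Variable R : realType.
Variable X : completeNormedModType R[i].
Variables (N : set (set X)) (J : set (X -> X)) (T : X -> X).
Hypothesis hN : nest N.
Hypothesis hJ : bimodule N J.
Hypothesis hT : M_of N (Phi_of J) T.
Variable n : nat.
Variable phi : 'I_n -> X -> R[i].
Hypothesis hphi : forall k, bounded_functional (phi k).
Variable x : 'I_n -> X.
Hypothesis hzero : forall S, J S -> \sum_(k < n) phi k (S (x k)) = 0.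

Lemma Ncs E : N E -> closed_subspace E.
Proof. by case: hN => h _; apply: h. Qed.

Lemma Ntot E F : N E -> N F -> E `<=` F \/ F `<=` E.
Proof. by case: hN => _ [h _]; apply: h. Qed.

Lemma N0 : N [set 0].
Proof. by case: hN => _ [_ []]. Qed.

Lemma Nmeet F : F `<=` N -> N (\bigcap_(E in F) E).
Proof. by case: hN => _ [_ [_ [_ [h _]]]]; apply: h. Qed.

Lemma Njoin F : F `<=` N -> N (cspan (\bigcup_(E in F) E)).
Proof. by case: hN => _ [_ [_ [_ [_ h]]]]; apply: h. Qed.

Lemma Jbop S : J S -> bounded_op S.
Proof. by case: hJ => [[h _] _] /h. Qed.

Lemma Jright A S : nest_alg N A -> J S -> J (S \o A).
Proof. by case: hJ => _ [_ h]; apply: h. Qed.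

Lemma linT : is_linear_op T.
Proof. by case: hT => [[]]. Qed.

Lemma linphi k : flin (phi k).
Proof. exact: bf_lin. Qed.

Definition Gop (y : X) : X := \sum_(k < n) phi k (T y) *: x k.
Definition Av (c : 'rV[R[i]]_n) : X := \sum_(k < n) c 0 k *: x k.
Definition Bv (y : X) : 'rV[R[i]]_n := \row_k phi k (T y).
Definition Mm : 'M[R[i]]_n := \matrix_(k, j) phi j (T (x k)).

Lemma GAB y : Gop y = Av (Bv y).
Proof. by rewrite /Av; apply: eq_bigr => k _; rewrite mxE. Qed.

Lemma MmE c : c *m Mm = Bv (Av c).
Proof.
apply/rowP => j; rewrite !mxE /Av (oplin_sum _ _ linT) (flin_sum _ _ (linphi j)).
by apply: eq_bigr => k _; rewrite !mxE.
Qed.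

Lemma AvZ a c : Av (a *: c) = a *: Av c.
Proof.
rewrite /Av scaler_sumr; apply: eq_bigr => k _; by rewrite mxE scalerA.
Qed.

Lemma AvL a c1 c2 : Av (a *: c1 + c2) = a *: Av c1 + Av c2.
Proof.
rewrite /Av scaler_sumr -big_split; apply: eq_bigr => k _.
by rewrite !mxE scalerDl scalerA.
Qed.

Lemma Av0 : Av 0 = 0.
Proof. by rewrite /Av big1 // => k _; rewrite mxE scale0r. Qed.

Lemma Bv0 : Bv 0 = 0.
Proof. by apply/rowP => j; rewrite !mxE (oplin0 linT) (flin0 (linphi j)). Qed.

Lemma GopL a y1 y2 : Gop (a *: y1 + y2) = a *: Gop y1 + Gop y2.
Proof.
rewrite /Gop scaler_sumr -big_split; apply: eq_bigr => k _.
by rewrite linT linphi scalerDl scalerA.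
Qed.

Lemma Gop0 : Gop 0 = 0.
Proof. by rewrite GAB Bv0 Av0. Qed.

Lemma cont_sum (V : normedModType R[i]) m (f : 'I_m -> X -> V) :
  (forall k, continuous (f k)) -> continuous (fun y => \sum_(k < m) f k y).
Proof.
elim: m f => [|m IH] f hf.
  by move=> y; under eq_fun do rewrite big_ord0; exact: cst_continuous.
move=> y; under eq_fun do rewrite big_ord_recr /=.
apply: continuousD; first exact: IH.
exact: hf.
Qed.

Lemma phiT_cont k : continuous ((fun y => phi k (T y)) : X -> (R[i] : numFieldType)).
Proof.
move=> y; apply: (@continuous_comp _ _ _ T (phi k : X -> (R[i] : numFieldType))).
  by apply: bop_cont; case: hT.
exact: bf_cont.
Qed.

Lemma Gop_cont : continuous Gop.
Proof.
apply: cont_sum => k y.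
apply: (@continuousZr_tmp _ _ _ (fun z => phi k (T z)) (x k) y); exact: phiT_cont.
Qed.

Lemma trMm : \tr Mm = \sum_(k < n) phi k (T (x k)).
Proof. by rewrite /mxtrace; apply: eq_bigr => k _; rewrite mxE. Qed.

Lemma star (psi : X -> R[i]) u : bounded_functional psi ->
  (forall E, N E -> (forall y, E y -> psi y = 0) \/ E u) -> psi (Gop u) = 0.
Proof.
move=> bpsi h.
pose Eu := \bigcap_(E in [set E | N E /\ E u]) E.
have NEu : N Eu by apply: Nmeet => E [].
have Euu : Eu u by move=> E [].
have adm v : Eu v -> forall E, N E -> (forall y, E y -> psi y = 0) \/ E v.
  move=> Euv E NE; case: (h E NE) => [k|Eu']; first by left.
  by right; apply: Euv.
pose g (y : X) : R[i] := \sum_(k < n) psi (x k) * phi k y.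
have gS S v : J S -> Eu v -> g (S v) = 0.
  move=> JS Euv.
  have JSr : J (S \o r1 v psi) by apply: Jright => //; apply: r1_alg; [exact: bpsi | exact: adm | exact: Ncs].
  have := hzero JSr; move=> <-; apply: eq_bigr => k _.
  by rewrite /= /r1 (oplinZ _ _ (bop_lin (Jbop JS))) (flinZ _ _ (linphi k)).
have gL a y1 y2 : g (a *: y1 + y2) = a * g y1 + g y2.
  rewrite /g mulr_sumr -big_split; apply: eq_bigr => k _.
  by rewrite linphi mulrDr mulrCA.
have gcont : continuous (g : X -> (R[i] : numFieldType)).
  apply: (@cont_sum (R[i] : numFieldType)) => k y.
  apply: continuousM; first exact: cst_continuous.
  exact: bf_cont.
have g0 : g 0 = 0.
  by rewrite /g big1 // => k _; rewrite (flin0 (linphi k)) mulr0.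
pose Z := [set y | g y = 0].
have Zcl : closed Z.
  have -> : Z = (g : X -> (R[i] : numFieldType)) @^-1` [set 0] by [].
  apply: preimage_closed => [y _|]; first exact: gcont.
  exact: (accessible_closed_set1 (hausdorff_accessible (@norm_hausdorff _ (R[i] : numFieldType)))).
have Zsub : subsp Z.
  by split => [|a y1 y2 h1 h2]; rewrite /Z /= ?gL ?h1 ?h2 ?mulr0 ?addr0.
have PhiZ : Phi_of J Eu `<=` Z.
  apply: cspan_sub => // y [S JS [v Euv <-]]; exact: gS.
have TuPhi : Phi_of J Eu (T u).
  by case: hT => _ /(_ Eu NEu); apply; exists u.
have := PhiZ _ TuPhi; rewrite /Z /= /g => hg.
rewrite /Gop (flin_sum _ _ (bf_lin bpsi)) -[X in _ = X]hg.
by apply: eq_bigr => k _; rewrite mulrC.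
Qed.

Lemma inv_G E y : N E -> E y -> E (Gop y).
Proof.
move=> NE Ey; apply: contrapT => nE.
have [psi [bpsi kpsi psi0]] := HB_sep (cs_closed (Ncs NE)) (cs_subsp (Ncs NE)) nE.
move/negP: psi0; apply; apply/eqP; apply: star => // E' NE'.
case: (Ntot NE' NE) => [s|s]; first by left => z /s; apply: kpsi.
by right; apply: s.
Qed.

Lemma eig (a : R[i]) (c : 'rV[R[i]]_n) : c *m Mm = a *: c -> c != 0 -> a = 0.
Proof.
move=> ec c0; case: (eqVneq a 0) => // a0; exfalso.
set u := Av c.
have Bu : Bv u = a *: c by rewrite -MmE.
have Gu : Gop u = a *: u by rewrite GAB Bu AvZ.
have u0 : u != 0.
  apply/eqP => u0; move: Bu; rewrite u0 Bv0 => /esym /eqP.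
  by rewrite scaler_eq0 (negbTE a0) (negbTE c0).
pose F := [set E | N E /\ ~ E u].
pose Kj := cspan (\bigcup_(E in F) E).
have NKj : N Kj by apply: Njoin => E [].
case: (pselect (Kj u)) => Kju; last first.
  have [psi [bpsi kpsi psi0]] := HB_sep (cs_closed (Ncs NKj)) (cs_subsp (Ncs NKj)) Kju.
  have := @star psi u bpsi.
  have hadm : forall E, N E -> (forall y, E y -> psi y = 0) \/ E u.
    move=> E NE; case: (pselect (E u)) => Eu; first by right.
    by left => y Ey; apply: kpsi; apply: sub_cspan; exists E.
  move=> /(_ hadm); rewrite Gu (flinZ _ _ (bf_lin bpsi)) => /eqP.
  by rewrite mulf_eq0 (negbTE a0) (negbTE psi0).
have Fne : exists E, F E.
  apply: contrapT => nF; apply: (negP u0); apply/eqP.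
  have hs : Kj `<=` [set 0].
    apply: cspan_sub; [exact: (cs_closed (Ncs N0)) | exact: (cs_subsp (Ncs N0)) |].
    by move=> y [E FE _]; exfalso; apply: nF; exists E.
  exact: hs.
have mrep E : exists M : 'M[R[i]]_n, closed_subspace E ->
    forall c', E (Av c') <-> (c' <= M)%MS.
  case: (pselect (closed_subspace E)) => [cE|ncE]; last by exists 0.
  have [S0 SL] := cs_subsp cE.
  have h0 : [set c' : 'rV[R[i]]_n | E (Av c')] 0 by rewrite /= Av0.
  have hL : forall (a' : R[i]) c1 c2, [set c' : 'rV[R[i]]_n | E (Av c')] c1 ->
      [set c' : 'rV[R[i]]_n | E (Av c')] c2 ->
      [set c' : 'rV[R[i]]_n | E (Av c')] (a' *: c1 + c2).
    by move=> a' c1 c2 h1 h2; rewrite /= AvL; apply: SL.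
  have [M hM] := subsp_mx h0 hL.
  by exists M.
have [mE hmE] := choice mrep.
pose P k := `[< exists E, F E /\ \rank (mE E) = k >].
have Pex : exists k, P k.
  by have [E FE] := Fne; exists (\rank (mE E)); apply/asboolP; exists E.
have Pub k : P k -> (k <= n)%N.
  by move=> /asboolP [E [_ <-]]; exact: rank_leq_col.
case: (ex_maxnP Pex Pub) => k /asboolP [E0 [FE0 rk0]] kmax.
have cE0 := Ncs FE0.1.
have claim E y : F E -> E y -> E0 (Gop y).
  move=> [NE nEu] Ey; have GE := inv_G NE Ey.
  case: (Ntot NE FE0.1) => [s|s]; first exact: s.
  have sub01 : (mE E0 <= mE E)%MS.
    apply/row_subP => i; apply/(hmE E (Ncs NE)); apply: s.
    by apply/(hmE E0 cE0); exact: row_sub.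
  have [le_r eq_r] := mxrank_leqif_sup sub01.
  have rkE : (\rank (mE E) <= k)%N.
    by apply: kmax; apply/asboolP; exists E.
  have : \rank (mE E0) = \rank (mE E) by lia.
  move/eqP; rewrite eq_r => sub10.
  rewrite GAB; apply/(hmE E0 cE0); apply: submx_trans sub10.
  by apply/(hmE E (Ncs NE)); rewrite -GAB.
pose Z := [set y | E0 (Gop y)].
have Zcl : closed Z.
  have -> : Z = Gop @^-1` E0 by [].
  apply: preimage_closed => [y _|]; first exact: Gop_cont.
  exact: cs_closed.
have Zsub : subsp Z.
  have [S0 SL] := cs_subsp cE0.
  split; first by rewrite /Z /= Gop0.
  by move=> a' y1 y2 h1 h2; rewrite /Z /= GopL; apply: SL.
have KZ : Kj `<=` Z.
  by apply: cspan_sub => // y [E FE Ey]; exact: claim FE Ey.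
have := KZ u Kju; rewrite /Z /= Gu => E0au.
apply: FE0.2.
have -> : u = a^-1 *: (a *: u) + 0 by rewrite addr0 scalerA mulVf // scale1r.
have [S0 SL] := cs_subsp cE0.
by apply: SL.
Qed.

Lemma key_sum : \sum_(k < n) phi k (T (x k)) = 0.
Proof. by rewrite -trMm; apply: trace_nil => a c; exact: eig. Qed.

End Key.
Lemma bf_scale (R : realType) (X : completeNormedModType R[i]) (d : R[i])
  (phi : X -> R[i]) : bounded_functional phi ->
  bounded_functional (fun y => d * phi y).
Proof.
move=> [lp [M hM]]; split.
  by move=> a x y; rewrite lp mulrDr mulrCA.
exists (complex.Re `|d| * M) => y; rewrite normrM.
rewrite CM re_norm ?normr_ge0 // -mulrA.
by apply: ler_wpM2l; [exact: normr_ge0 | exact: hM].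
Qed.

Theorem mainTheorem12 (R : realType) (X : completeNormedModType R[i])
  (N : set (set X)) (J : set (X -> X)) :
  nest N -> bimodule N J -> wot_closed J ->
  J = M_of N (Phi_of J) /\ J = Ref J.
Proof.
move=> hN hJ hW.
have [[Jbo [J0 JL]] _] := hJ.
have JsubM : J `<=` M_of N (Phi_of J).
  move=> T JT; split; first exact: Jbo.
  move=> E NE _ [y Ey <-]; apply: sub_cspan; exists T => //; by exists y.
have MsubJ : M_of N (Phi_of J) `<=` J.
  move=> T hT; apply: hW; split; first by case: hT.
  move=> n x phi eps hphi eps0.
  pose iota (S : X -> X) : 'rV[R[i]]_n := \row_k phi k (S (x k)).
  pose V := [set v | exists2 S, J S & v = iota S].
  have V0 : V 0.
    exists (fun _ => 0) => //; apply/rowP => k; rewrite !mxE.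
    by rewrite (flin0 (bf_lin (hphi k))).
  have VL : forall (a : R[i]) u v, V u -> V v -> V (a *: u + v).
    move=> a u v [S1 JS1 ->] [S2 JS2 ->].
    exists (fun y => a *: S1 y + S2 y); first exact: JL.
    by apply/rowP => k; rewrite !mxE (bf_lin (hphi k)).
  have [M hM] := subsp_mx V0 VL.
  case: (pselect (V (iota T))) => [[S JS eS]|nV].
    exists S => // k.
    have : iota T 0 k = iota S 0 k by rewrite eS.
    rewrite !mxE => ->; rewrite subrr normr0 ltcR //.
  exfalso.
  have nM : ~~ (iota T <= M)%MS by apply/negP => /hM.
  rewrite submxE in nM.
  have [j hj] : exists j, (iota T *m cokermx M) 0 j != 0.
    case: (pselect (exists j, (iota T *m cokermx M) 0 j != 0)) => [//|hn].
    exfalso; apply: (negP nM); apply/eqP/rowP => j; rewrite [RHS]mxE.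
    by apply/eqP/negPn/negP => hj; apply: hn; exists j.
  pose phi' k y := cokermx M k j * phi k y.
  have bphi' k : bounded_functional (phi' k) by apply: bf_scale.
  have hz : forall S, J S -> \sum_(k < n) phi' k (S (x k)) = 0.
    move=> S JS.
    have : (iota S <= M)%MS by apply/hM; exists S.
    rewrite submxE => /eqP /rowP /(_ j); rewrite !mxE => h.
    rewrite -[RHS]h; apply: eq_bigr => k _; by rewrite /phi' /iota /= mxE mulrC.
  have := key_sum hN hJ hT bphi' hz.
  move: hj; rewrite !mxE => /eqP hj h; apply: hj; rewrite -[RHS]h.
  by apply: eq_bigr => k _; rewrite /phi' /iota /= mxE mulrC.
have RsubM : Ref J `<=` M_of N (Phi_of J).
  move=> T [bT hT]; split => // E NE _ [y Ey <-].
  apply: (cspanS _ (hT y)) => _ [S JS <-]; exists S => //; by exists y.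
have JsubR : J `<=` Ref J.
  move=> T JT; split; first exact: Jbo.
  by move=> y; apply: sub_cspan; exists T.
split; apply/seteqP; split => //.
by move=> T /RsubM /MsubJ.
Qed.
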